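(* Assume the setting in the context (including conditions (1) and (2) on $\theta_i$) with $\gamma\le1$. Let $\epsilon,\eta\ge0$ and suppose $\tilde x\in\tilde{\mathcal{X}}$ is an $\epsilon$-PNE of $\tilde\Gamma$ satisfying the $\eta$-stability condition with respect to a generator profile $(Z(i,\tilde x))_i$, where $Z(i,\tilde x)=\{x_i^1,\dots,x_i^{d+1}\}$ with corresponding weights $\alpha(i,\tilde x)=(\alpha_i^l)_{l=1}^{d+1}$. Let the players choose random actions $X_i$ independently, with $\mathbb{P}(X_i=x_i^l)=\alpha_i^l$. Then for every $i\in N$, $$\mathbb{E}[f_i(X_i,X_{-i})]\le\mathbb{E}[f_i(x_i,X_{-i})]+\check\epsilon\quad\text{for all }x_i\in\mathcal{X}_i,$$ where $\check\epsilon=\epsilon+\eta+2H\big(\frac{(\sqrt n+1)M\Delta}{n}\big)^\gamma$; i.e. this profile of mixed strategies is an $\check\epsilon$-mixed Nash equilibrium of $\Gamma$.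
   Context: Setting: $N=\{1,\dots,n\}$; for each $i$, $\mathcal{X}_i\subset\mathbb{R}^d$ nonempty, closed, bounded, with diameter $\le\Delta$; $\tilde{\mathcal{X}}_i=\operatorname{conv}(\mathcal{X}_i)$; $\tilde{\mathcal{X}}=\prod_i\tilde{\mathcal{X}}_i$, $\tilde{\mathcal{X}}_{-i}=\prod_{j\ne i}\tilde{\mathcal{X}}_j$. $A_j$ real $q\times d$ matrices with $\|A_j\|_2\le M$. $\Omega\subset\mathbb{R}^q$ a neighborhood of $\{\frac1n\sum_jA_jy_j:y_j\in\tilde{\mathcal{X}}_j\}$; $\theta_i:\mathcal{X}_i\times\Omega\to\mathbb{R}$ with (1) $\theta_i(\cdot,y)$ lower semicontinuous on $\mathcal{X}_i$, (2) $|\theta_i(x_i,y')-\theta_i(x_i,y)|\le H\|y'-y\|^\gamma$ for all $i,x_i,y,y'$ ($H,\gamma>0$). Game $\Gamma$ costs: $f_i(x_i,x_{-i})=\theta_i(x_i,\frac1n\sum_jA_jx_j)$, $x_i\in\mathcal{X}_i$, $x_{-i}\in\tilde{\mathcal{X}}_{-i}$. Convexified game $\tilde\Gamma$: action sets $\tilde{\mathcal{X}}_i$, costs $\tilde f_i(x_i,x_{-i})=\inf\{\sum_{k=1}^{d+1}\alpha^kf_i(z^k,x_{-i}):\alpha\in\mathcal{S}_d,z^k\in\mathcal{X}_i,x_i=\sum_k\alpha^kz^k\}$ ($\mathcal{S}_d$ the probability simplex of $\mathbb{R}^{d+1}$). A generator for $(i,x)$ is a set $Z(i,x)=\{z^1,\ldots,z^{d+1}\}\subset\mathcal{X}_i$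 with weights $\alpha(i,x)\in\mathcal{S}_d$ attaining this infimum. An $\epsilon$-PNE of $\tilde\Gamma$: $x\in\tilde{\mathcal{X}}$ with $\tilde f_i(x_i,x_{-i})\le\tilde f_i(y_i,x_{-i})+\epsilon$ for all $i$, $y_i\in\tilde{\mathcal{X}}_i$. $\eta$-stability with respect to $(Z(i,x))_i$: $\tilde f_i(y_i,x_{-i})\le\tilde f_i(x_i,x_{-i})+\eta$ for all $i$, $y_i\in Z(i,x)$. *)

(* Defs.v *)
From HB Require Import structures.
From mathcomp Require Import all_boot all_order all_algebra.
From mathcomp Require Import classical_sets reals exp.
Set Implicit Arguments. Unset Strict Implicit. Unset Printing Implicit Defensive.
Import Order.TTheory GRing.Theory Num.Theory.
Local Open Scope ring_scope.

Section Game.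
Variable R : realType.

Definition vnorm (m : nat) (v : 'cV[R]_m) : R := Num.sqrt (\sum_i (v i 0) ^+ 2).

Definition simplex (k : nat) (a : 'I_k -> R) : Prop :=
  (forall l, 0 <= a l) /\ \sum_l a l = 1.

Definition closed_set (m : nat) (S : 'cV[R]_m -> Prop) : Prop :=
  forall x, (forall e, 0 < e -> exists2 y, S y & vnorm (x - y) < e) -> S x.
Definition bounded_set (m : nat) (S : 'cV[R]_m -> Prop) : Prop :=
  exists r, forall x, S x -> vnorm x <= r.
Definition diam_le (m : nat) (S : 'cV[R]_m -> Prop) (D : R) : Prop :=
  forall x y, S x -> S y -> vnorm (x - y) <= D.
Definition open_set (m : nat) (S : 'cV[R]_m -> Prop) : Prop :=
  forall x, S x -> exists2 e, 0 < e & forall y, vnorm (y - x) < e -> S y.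
Definition nbhd_of_set (m : nat) (Om S : 'cV[R]_m -> Prop) : Prop :=
  exists U, [/\ open_set U, (forall y, S y -> U y) & (forall y, U y -> Om y)].
Definition lsc_on (m : nat) (S : 'cV[R]_m -> Prop) (g : 'cV[R]_m -> R) : Prop :=
  forall x, S x -> forall t, t < g x ->
    exists2 e, 0 < e & forall x', S x' -> vnorm (x' - x) < e -> t < g x'.
Definition opnorm_le (p m : nat) (B : 'M[R]_(p, m)) (M : R) : Prop :=
  forall v : 'cV[R]_m, vnorm (B *m v) <= M * vnorm v.

Definition conv (m : nat) (S : 'cV[R]_m -> Prop) : 'cV[R]_m -> Prop :=
  fun x => exists k (w : 'I_k -> R) (z : 'I_k -> 'cV[R]_m),
    [/\ simplex w, (forall l, S (z l)) & x = \sum_l w l *: z l].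

Variables (n d q : nat).
Variable (X : 'I_n -> 'cV[R]_d -> Prop).
Variable (A : 'I_n -> 'M[R]_(q, d)).
Variable (theta : 'I_n -> 'cV[R]_d -> 'cV[R]_q -> R).

Definition agg (x : 'I_n -> 'cV[R]_d) : 'cV[R]_q := (n%:R)^-1 *: \sum_j A j *m x j.
Definition agg_range : 'cV[R]_q -> Prop :=
  fun y => exists x : 'I_n -> 'cV[R]_d, (forall j, conv (X j) (x j)) /\ y = agg x.

Definition upd (x : 'I_n -> 'cV[R]_d) (i : 'I_n) (y : 'cV[R]_d) : 'I_n -> 'cV[R]_d :=
  fun j => if j == i then y else x j.

Definition cost (i : 'I_n) (x : 'I_n -> 'cV[R]_d) : R := theta i (x i) (agg x).

(* convexified cost tilde f_i(y, x_{-i}); the i-th coordinate of x is ignored *)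
Definition tcost (i : 'I_n) (y : 'cV[R]_d) (x : 'I_n -> 'cV[R]_d) : R :=
  inf [set v | exists (a : 'I_d.+1 -> R) (z : 'I_d.+1 -> 'cV[R]_d),
     [/\ simplex a, (forall k, X i (z k)), y = \sum_k a k *: z k &
         v = \sum_k a k * cost i (upd x i (z k))]].

Definition is_eps_PNE (eps : R) (x : 'I_n -> 'cV[R]_d) : Prop :=
  (forall i, conv (X i) (x i)) /\
  forall i y, conv (X i) y -> tcost i (x i) x <= tcost i y x + eps.

Definition generator (i : 'I_n) (x : 'I_n -> 'cV[R]_d)
  (z : 'I_d.+1 -> 'cV[R]_d) (a : 'I_d.+1 -> R) : Prop :=
  [/\ simplex a, (forall k, X i (z k)), x i = \sum_k a k *: z k &
      \sum_k a k * cost i (upd x i (z k)) = tcost i (x i) x].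

Definition eta_stable (eta : R) (x : 'I_n -> 'cV[R]_d) (z : 'I_n -> 'I_d.+1 -> 'cV[R]_d) : Prop :=
  forall i l, tcost i (z i l) x <= tcost i (x i) x + eta.

(* Independent mixed strategies: X_j = z j l with probability a j l.
   Expectations over the finite product distribution. *)
Definition prob_of (a : 'I_n -> 'I_d.+1 -> R) (p : {ffun 'I_n -> 'I_d.+1}) : R :=
  \prod_j a j (p j).
Definition exp_cost (z : 'I_n -> 'I_d.+1 -> 'cV[R]_d) (a : 'I_n -> 'I_d.+1 -> R)
  (i : 'I_n) : R :=
  \sum_(p : {ffun 'I_n -> 'I_d.+1}) prob_of a p * cost i (fun j => z j (p j)).
Definition exp_dev_cost (z : 'I_n -> 'I_d.+1 -> 'cV[R]_d) (a : 'I_n -> 'I_d.+1 -> R)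
  (i : 'I_n) (y : 'cV[R]_d) : R :=
  \sum_(p : {ffun 'I_n -> 'I_d.+1}) prob_of a p * cost i (upd (fun j => z j (p j)) i y).

End Game.

(* Main.v *)
Require Import Defs.
From HB Require Import structures.
From mathcomp Require Import all_boot all_order all_algebra.
From mathcomp Require Import classical_sets reals exp.
From mathcomp Require Import boolp topology normedtype.
From mathcomp Require Import ring lra.
Import numFieldNormedType.Exports.
Import Order.TTheory GRing.Theory Num.Theory.
Local Open Scope ring_scope.

Section Aux.
Variable R : realType.

Lemma young_pow {u g : R} : 0 <= u -> 0 < g -> g <= 1 -> u `^ g <= 1 - g + g * u.
Proof.
move=> u0 g0 g1; have [->|g1'] := eqVneq g 1.
  by rewrite powRr1 // subrr add0r mul1r.
have glt : g < 1 by rewrite lt_neqAle g1' g1.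
have h := @conjugate_powR R (u `^ g) 1 (g^-1) ((1 - g)^-1) (powR_ge0 _ _) ler01.
have hp : 0 < g^-1 by rewrite invr_gt0.
have hq : 0 < (1 - g)^-1 by rewrite invr_gt0 subr_gt0.
have hs : (g^-1)^-1 + ((1 - g)^-1)^-1 = 1 by rewrite !invrK addrC subrK.
move: (h hp hq hs); rewrite mulr1 -powRrM mulfV ?gt_eqF // powRr1 // powR1 !invrK.
by move=> H; apply: (le_trans H); lra.
Qed.

Lemma jensen_pow (I : finType) (w T : I -> R) (B g : R) :
  (forall l, 0 <= w l) -> \sum_l w l = 1 -> (forall l, 0 <= T l) -> 0 <= B ->
  \sum_l w l * T l ^+ 2 <= B ^+ 2 -> 0 < g -> g <= 1 ->
  \sum_l w l * T l `^ g <= B `^ g.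
Proof.
move=> w0 w1 T0 B0 hS g0 g1.
have [B0'|Bp] := eqVneq B 0.
  subst B; rewrite expr0n /= in hS.
  have hz : \sum_l w l * T l ^+ 2 = 0.
    by apply/le_anti; rewrite hS sumr_ge0 // => l _; rewrite mulr_ge0 // sqr_ge0.
  rewrite big1 ?powR_ge0 // => l _.
  have := psumr_eq0P (fun l _ => mulr_ge0 (w0 l) (sqr_ge0 (T l))) hz (erefl true : true).
  move=> /(_ l) /eqP; rewrite mulf_eq0 => /orP[/eqP->|]; first by rewrite mul0r.
  by rewrite sqrf_eq0 => /eqP ->; rewrite powR0 ?gt_eqF // mulr0.
have Bp' : 0 < B by rewrite lt_neqAle eq_sym Bp B0.
have key : forall l, w l * T l `^ g <=
   B `^ g * ((1 - g / 2) * w l + (g / 2 / B ^+ 2) * (w l * T l ^+ 2)).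
  move=> l.
  have -> : T l = (T l / B) * B by rewrite divfK // gt_eqF.
  rewrite powRM ?divr_ge0 ?(ltW Bp') //.
  have u0 : 0 <= T l / B by rewrite divr_ge0 // ltW.
  have h1 := young_pow u0 g0 g1.
  have h2 : T l / B <= (1 + (T l / B) ^+ 2) / 2.
    have := sqr_ge0 (T l / B - 1); lra.
  have h3 : (T l / B) `^ g <= 1 - g / 2 + g / 2 * (T l / B) ^+ 2.
    apply: (le_trans h1); nra.
  have e : (T l / B * B) ^+ 2 = (T l / B) ^+ 2 * B ^+ 2 by rewrite exprMn.
  rewrite e.
  have Bg : 0 <= B `^ g by apply: powR_ge0.
  have -> : (1 - g / 2) * w l + g / 2 / B ^+ 2 * (w l * ((T l / B) ^+ 2 * B ^+ 2))
     = w l * (1 - g / 2 + g / 2 * (T l / B) ^+ 2).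
    by field; rewrite gt_eqF.
  have -> : w l * ((T l / B) `^ g * B `^ g) = B `^ g * (w l * (T l / B) `^ g) by ring.
  by rewrite ler_wpM2l // ler_wpM2l.
apply: (le_trans (ler_sum _ (fun l _ => key l))).
rewrite -mulr_sumr big_split /= -mulr_sumr -mulr_sumr w1.
rewrite -{2}(mulr1 (B `^ g)) ler_wpM2l ?powR_ge0 //.
have : g / 2 / B ^+ 2 * (\sum_i w i * T i ^+ 2) <= g / 2 / B ^+ 2 * B ^+ 2.
  by rewrite ler_wpM2l // divr_ge0 ?sqr_ge0 // divr_ge0 // ltW.
rewrite divfK ?sqrf_eq0 ?gt_eqF //; lra.
Qed.

Lemma var_le (I : finType) (a u : I -> R) (c : R) :
  \sum_l a l = 1 ->
  \sum_l a l * (u l - \sum_k a k * u k) ^+ 2 <= \sum_l a l * (u l - c) ^+ 2.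
Proof.
move=> a1; set m := \sum_k a k * u k.
have e : forall l, a l * (u l - c) ^+ 2 =
   a l * (u l - m) ^+ 2 + ((2 * (m - c)) * (a l * u l) - (2 * (m - c) * m) * a l)
   + (m - c) ^+ 2 * a l.
  by move=> l; ring.
rewrite (eq_bigr _ (fun l _ => e l)) !big_split /= sumrN -!mulr_sumr a1 -/m.
by rewrite mulr1 subrr addr0 lerDl mulr1 sqr_ge0.
Qed.

Lemma mean_zero (I : finType) (a u : I -> R) :
  \sum_l a l = 1 -> \sum_l a l * (u l - \sum_k a k * u k) = 0.
Proof.
move=> a1; under eq_bigr do rewrite mulrBr.
by rewrite sumrB -mulr_suml a1 mul1r subrr.
Qed.

End Aux.
Section Prod.
Variable R : realType.
Variables (I J : finType).
Variable a : I -> J -> R.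
Hypothesis a1 : forall k, \sum_l a k l = 1.

Lemma sum_prod_ffun (G : I -> J -> R) :
  \sum_(p : {ffun I -> J}) (\prod_j a j (p j)) * \prod_j G j (p j) =
  \prod_j \sum_l a j l * G j l.
Proof.
by rewrite bigA_distr_bigA; apply: eq_bigr => p _; rewrite big_split.
Qed.

Lemma marg0 : \sum_(p : {ffun I -> J}) \prod_j a j (p j) = 1.
Proof.
rewrite -(bigA_distr_bigA (fun j l => a j l)) big1 // => k _; exact: a1.
Qed.

Lemma marg1 (j0 : I) (F : J -> R) :
  \sum_(p : {ffun I -> J}) (\prod_j a j (p j)) * F (p j0) = \sum_l a j0 l * F l.
Proof.
pose G k l := if k == j0 then F l else 1.
have hG : forall p : {ffun I -> J}, \prod_k G k (p k) = F (p j0).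
  move=> p; rewrite (bigD1 j0) //= /G eqxx big1 ?mulr1 // => k /negbTE -> //.
rewrite (eq_bigr (fun p : {ffun I -> J} => (\prod_j a j (p j)) * \prod_k G k (p k))); last first.
  by move=> p _; rewrite hG.
have hr : \prod_(k | k != j0) \sum_l a k l * G k l = 1.
  apply: big1 => k /negbTE hk; rewrite /G hk.
  by under eq_bigr do rewrite mulr1; exact: a1.
rewrite sum_prod_ffun (bigD1 j0) //= hr mulr1 /G.
by apply: eq_bigr => l _; rewrite eqxx.
Qed.

Lemma marg2 (j0 j1 : I) (F F' : J -> R) : j0 != j1 ->
  \sum_(p : {ffun I -> J}) (\prod_j a j (p j)) * (F (p j0) * F' (p j1)) =
  (\sum_l a j0 l * F l) * (\sum_l a j1 l * F' l).
Proof.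
move=> ne.
have ne' : (j1 == j0) = false by rewrite eq_sym (negbTE ne).
pose G k l := if k == j0 then F l else if k == j1 then F' l else 1.
have hG : forall p : {ffun I -> J}, \prod_k G k (p k) = F (p j0) * F' (p j1).
  move=> p; rewrite (bigD1 j0) //= (bigD1 j1) 1?eq_sym //= /G eqxx.
  rewrite ne' eqxx big1 ?mulr1 //.
  by move=> k /andP[/negbTE -> /negbTE ->].
rewrite (eq_bigr (fun p : {ffun I -> J} => (\prod_j a j (p j)) * \prod_k G k (p k))); last first.
  by move=> p _; rewrite hG.
have hr : \prod_(k | (k != j0) && (k != j1)) \sum_l a k l * G k l = 1.
  apply: big1 => k /andP[/negbTE h0 /negbTE h1]; rewrite /G h0 h1.
  by under eq_bigr do rewrite mulr1; exact: a1.
rewrite sum_prod_ffun (bigD1 j0) //= (bigD1 j1) 1?eq_sym //= hr mulr1 /G.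
rewrite eqxx ne' eqxx.
by congr (_ * _); apply: eq_bigr => l _; rewrite ?eqxx // ne' eqxx.
Qed.

Lemma second_moment (P : pred I) (f : I -> J -> R) :
  (forall j, \sum_l a j l * f j l = 0) ->
  \sum_(p : {ffun I -> J}) (\prod_j a j (p j)) * (\sum_(j | P j) f j (p j)) ^+ 2 =
  \sum_(j | P j) \sum_l a j l * f j l ^+ 2.
Proof.
move=> f0.
have e : forall p : {ffun I -> J}, (\sum_(j | P j) f j (p j)) ^+ 2 =
   \sum_(j | P j) \sum_(j' | P j') f j (p j) * f j' (p j').
  by move=> p; rewrite expr2 big_distrlr.
under eq_bigr do rewrite e mulr_sumr.
rewrite exchange_big /=; apply: eq_bigr => j Pj.
under eq_bigr do rewrite mulr_sumr.
rewrite exchange_big /= (bigD1 j) //=.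
have hr : \sum_(j' | P j' && (j' != j)) \sum_(p : {ffun I -> J})
    (\prod_j a j (p j)) * (f j (p j) * f j' (p j')) = 0.
  apply: big1 => j' /andP[_ ne].
  by rewrite (@marg2 j j' (fun l => f j l) (fun l => f j' l)) 1?eq_sym // f0 mul0r.
rewrite hr addr0.
under eq_bigr do rewrite -expr2.
exact: (marg1 j (fun l => f j l ^+ 2)).
Qed.

End Prod.
Section Norms.
Variable R : realType.
Local Open Scope classical_set_scope.

Lemma vnorm_ge0 {m} (v : 'cV[R]_m) : 0 <= vnorm v.
Proof. exact: sqrtr_ge0. Qed.

Lemma vnorm_sq {m} (v : 'cV[R]_m) : vnorm v ^+ 2 = \sum_i v i 0 ^+ 2.
Proof. by rewrite sqr_sqrtr // sumr_ge0 // => i _; rewrite sqr_ge0. Qed.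

Lemma vnorm0 m : vnorm (0 : 'cV[R]_m) = 0.
Proof. by rewrite /vnorm big1 ?sqrtr0 // => i _; rewrite mxE expr0n. Qed.

Lemma vnorm_coord {m} (v : 'cV[R]_m) k : `|v k 0| <= vnorm v.
Proof.
rewrite /vnorm -sqrtr_sqr ler_sqrt ?sumr_ge0 // => [|i _]; last by rewrite sqr_ge0.
rewrite (bigD1 k) //= lerDl sumr_ge0 // => i _; exact: sqr_ge0.
Qed.

Lemma vnormZ {m} (c : R) (v : 'cV[R]_m) : vnorm (c *: v) = `|c| * vnorm v.
Proof.
rewrite /vnorm -sqrtr_sqr -sqrtrM ?sqr_ge0 //; congr Num.sqrt.
by rewrite mulr_sumr; apply: eq_bigr => i _; rewrite mxE exprMn.
Qed.

Lemma vnormN {m} (v : 'cV[R]_m) : vnorm (- v) = vnorm v.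
Proof.
by rewrite -scaleN1r vnormZ normrN normr1 mul1r.
Qed.

Lemma mxnorm_coord {m} (w : 'rV[R]_m) k : `|w 0 k| <= `|w|.
Proof.
rewrite [X in _ <= X]mx_normrE.
exact: (@le_bigmax _ _ _ 0 (fun ij : 'I_1 * 'I_m => `|w ij.1 ij.2|) (0, k)).
Qed.

Lemma mxnorm_le_vnorm {m} (w : 'rV[R]_m) : `|w| <= vnorm w^T.
Proof.
rewrite [X in X <= _]mx_normrE; apply: bigmax_le; first exact: vnorm_ge0.
move=> [i j] _ /=; rewrite (ord1 i).
by have := vnorm_coord w^T j; rewrite mxE.
Qed.

Lemma vnorm_le_mxnorm {m} (w : 'rV[R]_m) : vnorm w^T <= m%:R * `|w|.
Proof.
have w0 : 0 <= `|w| by [].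
rewrite /vnorm -[X in _ <= X]ger0_norm ?mulr_ge0 // -sqrtr_sqr ler_sqrt ?sqr_ge0 //.
apply: (@le_trans _ _ (\sum_(i < m) `|w| ^+ 2)).
  apply: ler_sum => i _; rewrite mxE.
  have := mxnorm_coord w i; rewrite ler_norml => /andP[h1 h2]; nra.
rewrite sumr_const card_ord -(mulr_natl (`|w| ^+ 2)) exprMn ler_wpM2r ?sqr_ge0 //.
rewrite -natrX ler_nat.
by case: (m) => // m'; rewrite -mulnn leq_pmulr.
Qed.

Lemma lsc_lb m (S : 'cV[R]_m -> Prop) (g : 'cV[R]_m -> R) :
  closed_set S -> Defs.bounded_set S -> lsc_on S g ->
  exists c, forall x, S x -> c <= g x.
Proof.
move=> Scl [r0 Sbd] Slsc.
pose T : set 'rV[R]_m := fun w => S w^T.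
have m1 : 0 < m%:R + 1 :> R by rewrite ltr_pwDr // ler0n.
have Tc : compact T.
  apply: bounded_closed_compact.
    exists r0; split; first exact: num_real.
    move=> M hM w Tw /=.
    apply: (le_trans (mxnorm_le_vnorm w)); apply: (le_trans (Sbd _ Tw)).
    exact: ltW.
  move=> w cw; apply: Scl => e e0.
  have hb : nbhs w (ball w (e / (m%:R + 1))) by apply: nbhsx_ballx; rewrite divr_gt0.
  have [y [Ty bwy]] := cw _ hb.
  exists y^T => //.
  rewrite -linearB /=; apply: (le_lt_trans (vnorm_le_mxnorm _)).
  move: bwy; rewrite -ball_normE /ball_ /= => bwy.
  apply: (@le_lt_trans _ _ (m%:R * (e / (m%:R + 1)))).
    by rewrite ler_wpM2l ?ler0n // ltW.
  rewrite mulrA ltr_pdivrMr //; nra.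
have hc : forall w : 'rV[R]_m, exists e : R, 0 < e /\
    (T w -> forall x', S x' -> vnorm (x' - w^T) < e -> g (w^T) - 1 < g x').
  move=> w; case: (pselect (T w)) => Tw; last by exists 1; split.
  have lt1 : g w^T - 1 < g w^T by rewrite ltrBlDr ltrDl.
  have [e e0 he] := Slsc _ Tw (g w^T - 1) lt1.
  by exists e; split => // _; exact: he.
have [ef hef] := choice hc.
pose rr w := ef w / (m%:R + 1).
rewrite compact_cover in Tc.
have [||D' sub cov] := Tc _ T (fun w => ball w (rr w)).
- by move=> w _; exact: ball_open.
- move=> w Tw; exists w => //; apply: ballxx.
  by rewrite divr_gt0 //; case: (hef w).
exists (- \sum_(w <- finmap.enum_fset D') `|g w^T - 1|).
move=> x Sx.
have Tx : T x^T by rewrite /T /= trmxK.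
have [w D'w bw] := cov _ Tx.
have D'w' : w \in finmap.enum_fset D' by exact: D'w.
have [ep he] := hef w.
have Tw : T w by move: (sub w D'w); rewrite inE.
have hlt : g w^T - 1 < g x.
  apply: (he Tw) => //.
  have -> : x - w^T = (x^T - w)^T by rewrite linearB /= trmxK.
  apply: (le_lt_trans (vnorm_le_mxnorm _)).
  move: bw; rewrite -ball_normE /ball_ /= => bw.
  rewrite -normrN opprB.
  apply: (@le_lt_trans _ _ (m%:R * rr w)).
    by rewrite ler_wpM2l ?ler0n // ltW.
  rewrite /rr mulrA ltr_pdivrMr //; nra.
apply: le_trans (ltW hlt).
rewrite (bigD1_seq w D'w' (finmap.fset_uniq D')) /= opprD.
have hs : 0 <= \sum_(i <- finmap.enum_fset D' | i != w) `|g i^T - 1|.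
  by apply: sumr_ge0 => i _; exact: normr_ge0.
have := ler_norml (g w^T - 1) `|g w^T - 1|; rewrite lexx => /esym /andP[h _].
lra.
Qed.

End Norms.
Section GameAux.
Variable R : realType.
Variables (n d q : nat).
Variable A : 'I_n -> 'M[R]_(q, d).

Lemma agg_diff0 (u v : 'I_n -> 'cV[R]_d) :
  agg A u - agg A v = n%:R^-1 *: \sum_j A j *m (u j - v j).
Proof.
rewrite /agg -scalerBr -sumrB; congr (_ *: _).
by apply: eq_bigr => j _; rewrite mulmxBr.
Qed.

Lemma agg_diff (u v : 'I_n -> 'cV[R]_d) i : u i = v i ->
  agg A u - agg A v = n%:R^-1 *: \sum_(j | j != i) A j *m (u j - v j).
Proof.
move=> hu; rewrite agg_diff0 (bigD1 i) //= hu subrr mulmx0 add0r //.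
Qed.

Lemma upd_eq (x : 'I_n -> 'cV[R]_d) i y : upd x i y i = y.
Proof. by rewrite /upd eqxx. Qed.

Lemma upd_neq (x : 'I_n -> 'cV[R]_d) i y j : j != i -> upd x i y j = x j.
Proof. by rewrite /upd => /negbTE ->. Qed.

End GameAux.

Lemma conv_of {R : realType} {d : nat} {S : 'cV[R]_d -> Prop} {x : 'cV[R]_d} :
  S x -> conv S x.
Proof.
move=> Sx; exists 1%N, (fun _ => 1), (fun _ => x); split => //.
- by split => [l|]; rewrite ?big_ord1 // ler01.
- by rewrite big_ord1 scale1r.
Qed.
Import Defs.

Theorem proposition3 (R : realType) (n d q : nat)
  (X : 'I_n -> 'cV[R]_d -> Prop) (Delta M H gamma : R)
  (A : 'I_n -> 'M[R]_(q, d)) (Om : 'cV[R]_q -> Prop)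
  (theta : 'I_n -> 'cV[R]_d -> 'cV[R]_q -> R) :
  (forall i, exists x, X i x) ->
  (forall i, closed_set (X i)) ->
  (forall i, bounded_set (X i)) ->
  (forall i, diam_le (X i) Delta) ->
  (forall j, opnorm_le (A j) M) ->
  nbhd_of_set Om (agg_range X A) ->
  (forall i y, Om y -> lsc_on (X i) (fun x => theta i x y)) ->
  0 < H -> 0 < gamma ->
  (forall i x y y', X i x -> Om y -> Om y' ->
     `|theta i x y' - theta i x y| <= H * (vnorm (y' - y)) `^ gamma) ->
  gamma <= 1 ->
  forall (eps eta : R) (xt : 'I_n -> 'cV[R]_d)
         (z : 'I_n -> 'I_d.+1 -> 'cV[R]_d) (a : 'I_n -> 'I_d.+1 -> R),
  0 <= eps -> 0 <= eta ->
  is_eps_PNE X A theta eps xt ->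
  (forall i, generator X A theta i xt (z i) (a i)) ->
  eta_stable X A theta eta xt z ->
  forall i x, X i x ->
    exp_cost A theta z a i <=
    exp_dev_cost A theta z a i x
      + (eps + eta + 2 * H * (((Num.sqrt (n%:R) + 1) * M * Delta / n%:R) `^ gamma)).
Proof.
move=> Xne Xcl Xbd Xdiam Anorm Omn lsc H0 g0 hold g1 eps eta xt z a eps0 eta0
  [xtconv pne] gen stab i x Xx.
have a0 : forall j l, 0 <= a j l by move=> j l; case: (gen j) => [[h _] _ _ _]; exact: h.
have a1 : forall j, \sum_l a j l = 1 by move=> j; case: (gen j) => [[_ h] _ _ _]; exact: h.
have zX : forall j l, X j (z j l) by move=> j l; case: (gen j) => _ h _ _; exact: h.
have xtE : forall j, xt j = \sum_l a j l *: z j l by move=> j; case: (gen j).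
have genE : forall j, \sum_l a j l * cost A theta j (upd xt j (z j l)) = tcost X A theta j (xt j) xt.
  by move=> j; case: (gen j).
have OmA : forall u, (forall j, conv (X j) (u j)) -> Om (agg A u).
  move=> u hu; case: Omn => U [_ h1 h2]; apply: h2; apply: h1; by exists u.
have holdU : forall w y y', X i w -> Om y -> Om y' ->
    theta i w y' <= theta i w y + H * (vnorm (y' - y)) `^ gamma.
  move=> w y y' Xw Oy Oy'; have := hold i w y y' Xw Oy Oy'.
  by rewrite ler_norml => /andP[_ h]; lra.
have holdL : forall w y y', X i w -> Om y -> Om y' ->
    theta i w y - H * (vnorm (y' - y)) `^ gamma <= theta i w y'.
  move=> w y y' Xw Oy Oy'; have := hold i w y y' Xw Oy Oy'.
  by rewrite ler_norml => /andP[h _]; lra.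
pose M' := Num.max M 0.
have M'0 : 0 <= M' by rewrite le_max lexx orbT.
have MM' : M <= M' by rewrite le_max lexx.
have Anorm' : forall j v, vnorm (A j *m v) <= M' * vnorm v.
  move=> j v; apply: (le_trans (Anorm j v)); rewrite ler_wpM2r //; exact: vnorm_ge0.
have D0 : 0 <= Delta.
  by have := Xdiam i x x Xx Xx; rewrite subrr vnorm0.
have n0 : (0 < n)%N := leq_ltn_trans (leq0n i) (ltn_ord i).
have nR : 0 < n%:R :> R by rewrite ltr0n.
pose D (p : {ffun 'I_n -> 'I_d.+1}) : 'cV[R]_q :=
  n%:R^-1 *: \sum_(j | j != i) A j *m (z j (p j) - xt j).
have hD1 : forall p : {ffun 'I_n -> 'I_d.+1}, agg A (fun j => z j (p j)) - agg A (upd xt i (z i (p i))) = D p.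
  move=> p; rewrite (@agg_diff _ _ _ _ A _ _ i) ?upd_eq //; congr (_ *: _).
  by apply: eq_bigr => j ji; rewrite upd_neq.
have hD2 : forall p : {ffun 'I_n -> 'I_d.+1}, agg A (upd (fun j => z j (p j)) i x) - agg A (upd xt i x) = D p.
  move=> p; rewrite (@agg_diff _ _ _ _ A _ _ i) ?upd_eq //; congr (_ *: _).
  by apply: eq_bigr => j ji; rewrite !upd_neq.
have convZ : forall j l, conv (X j) (z j l) by move=> j l; apply: conv_of.
have OmZ : forall p : {ffun 'I_n -> 'I_d.+1}, Om (agg A (fun j => z j (p j))) by move=> p; apply: OmA.
have OmU : forall (u : 'I_n -> 'cV[R]_d) w, (forall j, conv (X j) (u j)) -> conv (X i) w ->
    Om (agg A (upd u i w)).
  by move=> u w hu hw; apply: OmA => j; rewrite /upd; case: eqP => [->|_].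
pose E := \sum_(p : {ffun 'I_n -> 'I_d.+1}) prob_of a p * vnorm (D p) `^ gamma.
pose K := ((Num.sqrt (n%:R) + 1) * M * Delta / n%:R) `^ gamma.
have prob0 : forall p, 0 <= prob_of a p by move=> p; apply: prodr_ge0 => j _.
have fu : forall k j l, (A j *m (z j l - xt j)) k 0 =
    (A j *m z j l) k 0 - \sum_l' a j l' * (A j *m z j l') k 0.
  move=> k j l.
  have -> : (A j *m (z j l - xt j)) k 0 = (A j *m z j l) k 0 - (A j *m xt j) k 0.
    by rewrite mulmxBr !mxE.
  congr (_ - _).
  rewrite xtE mulmx_sumr summxE; apply: eq_bigr => l' _; by rewrite -scalemxAr mxE.
pose f k j l := (A j *m (z j l - xt j)) k (0 : 'I_1).
have hDk : forall (p : {ffun 'I_n -> 'I_d.+1}) k,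
    D p k 0 = n%:R^-1 * \sum_(j | j != i) f k j (p j).
  by move=> p k; rewrite /D mxE summxE.
have fmean : forall k j, \sum_l a j l * f k j l = 0.
  move=> k j; rewrite /f; under eq_bigr do rewrite fu.
  exact: (@mean_zero _ _ (a j) (fun l => (A j *m z j l) k 0) (a1 j)).
have step1 : \sum_(p : {ffun 'I_n -> 'I_d.+1}) prob_of a p * vnorm (D p) ^+ 2 =
    (n%:R^-1) ^+ 2 * \sum_k \sum_(j | j != i) \sum_l a j l * f k j l ^+ 2.
  under eq_bigr do rewrite vnorm_sq mulr_sumr.
  rewrite exchange_big mulr_sumr /=; apply: eq_bigr => k _.
  under eq_bigr do rewrite hDk exprMn mulrCA.
  rewrite -mulr_sumr /prob_of.
  by rewrite (@second_moment _ _ _ a a1 (fun j => j != i) (f k) (fmean k)).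
have step2 : forall j, \sum_k \sum_l a j l * f k j l ^+ 2 <= (M' * Delta) ^+ 2.
  move=> j.
  apply: (@le_trans _ _ (\sum_k \sum_l a j l *
      ((A j *m z j l) k 0 - (A j *m z j ord0) k 0) ^+ 2)).
    apply: ler_sum => k _; rewrite /f; under eq_bigr do rewrite fu.
    exact: (@var_le _ _ (a j) (fun l => (A j *m z j l) k 0) _ (a1 j)).
  rewrite exchange_big /=.
  apply: (@le_trans _ _ (\sum_l a j l * (M' * Delta) ^+ 2)); last first.
    by rewrite -mulr_suml a1 mul1r.
  apply: ler_sum => l _; rewrite -mulr_sumr ler_wpM2l //.
  have e : \sum_k ((A j *m z j l) k 0 - (A j *m z j ord0) k 0) ^+ 2 =
      vnorm (A j *m (z j l - z j ord0)) ^+ 2.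
    by rewrite vnorm_sq; apply: eq_bigr => k _; rewrite mulmxBr !mxE.
  rewrite e.
  have hv : vnorm (A j *m (z j l - z j ord0)) <= M' * Delta.
    apply: (le_trans (Anorm' j _)); rewrite ler_wpM2l //.
    exact: (Xdiam j _ _ (zX j l) (zX j ord0)).
  have hv0 := vnorm_ge0 R (A j *m (z j l - z j ord0)).
  move: hv hv0; set v := vnorm _; set b := M' * Delta => hv hv0; nra.
pose B' := (Num.sqrt n%:R + 1) * M' * Delta / n%:R.
have B'0 : 0 <= B'.
  rewrite /B' mulr_ge0 ?invr_ge0 ?ler0n // mulr_ge0 // mulr_ge0 //.
  by rewrite addr_ge0 ?sqrtr_ge0.
have hS : \sum_(p : {ffun 'I_n -> 'I_d.+1}) prob_of a p * vnorm (D p) ^+ 2 <= B' ^+ 2.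
  rewrite step1.
  apply: (@le_trans _ _ ((n%:R^-1) ^+ 2 * (n%:R * (M' * Delta) ^+ 2))).
    rewrite ler_wpM2l ?sqr_ge0 // exchange_big /=.
    apply: (@le_trans _ _ (\sum_(j | j != i) (M' * Delta) ^+ 2)).
      by apply: ler_sum => j _; exact: step2.
    apply: (@le_trans _ _ (\sum_(j : 'I_n) (M' * Delta) ^+ 2)).
      rewrite [X in _ <= X](bigID (fun j => j != i)) /= lerDl.
      by apply: sumr_ge0 => j _; exact: sqr_ge0.
    by rewrite sumr_const card_ord mulr_natl.
  have hs : n%:R <= (Num.sqrt n%:R + 1) ^+ 2 :> R.
    rewrite sqrrD1 sqr_sqrtr ?ler0n //.
    have := sqrtr_ge0 (n%:R : R); lra.
  have -> : B' ^+ 2 = (n%:R^-1) ^+ 2 * ((Num.sqrt n%:R + 1) ^+ 2 * (M' * Delta) ^+ 2).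
    by rewrite /B'; ring.
  by rewrite ler_wpM2l ?sqr_ge0 // ler_wpM2r ?sqr_ge0.
have hJ := @jensen_pow R _ (prob_of a) (fun p => vnorm (D p)) B' gamma prob0
  (ltac:(rewrite /prob_of; exact: (@marg0 _ _ _ a a1))) (fun p => vnorm_ge0 R (D p)) B'0 hS g0 g1.
have hE : E <= K.
  apply: (le_trans hJ); rewrite /K.
  case: (leP 0 M) => hM.
    by rewrite /B' /M' max_l.
  have -> : B' = 0 by rewrite /B' /M' max_r ?ltW // mulr0 !mul0r.
  by rewrite powR0 ?gt_eqF // powR_ge0.
have HEe : \sum_(p : {ffun 'I_n -> 'I_d.+1}) prob_of a p * (H * vnorm (D p) `^ gamma) = H * E.
  by rewrite /E mulr_sumr; apply: eq_bigr => p _; rewrite mulrCA.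
have hcost : exp_cost A theta z a i <= tcost X A theta i (xt i) xt + H * E.
  rewrite /exp_cost.
  apply: (@le_trans _ _ (\sum_(p : {ffun 'I_n -> 'I_d.+1}) prob_of a p *
      (cost A theta i (upd xt i (z i (p i))) + H * vnorm (D p) `^ gamma))).
    apply: ler_sum => p _; apply: ler_wpM2l; first exact: prob0.
    rewrite /cost upd_eq /= -hD1; apply: holdU => //.
    by apply: OmU => //; exact: convZ.
  under eq_bigr do rewrite mulrDr.
  rewrite big_split /= HEe -genE lerD2r /prob_of.
  by rewrite (@marg1 _ _ _ a a1 i (fun l => cost A theta i (upd xt i (z i l)))).
have hdev : cost A theta i (upd xt i x) - H * E <= exp_dev_cost A theta z a i x.
  rewrite /exp_dev_cost.
  apply: (@le_trans _ _ (\sum_(p : {ffun 'I_n -> 'I_d.+1}) prob_of a p *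
      (cost A theta i (upd xt i x) - H * vnorm (D p) `^ gamma))); last first.
    apply: ler_sum => p _; apply: ler_wpM2l; first exact: prob0.
    rewrite /cost !upd_eq -hD2; apply: holdL => //.
      exact: (OmU xt x xtconv (conv_of Xx)).
    by apply: OmU => [j|]; [exact: convZ | exact: conv_of].
  under eq_bigr do rewrite mulrBr.
  rewrite sumrB HEe -mulr_suml /prob_of (@marg0 _ _ _ a a1) mul1r //.
have hpne : tcost X A theta i (xt i) xt <= tcost X A theta i x xt + eps.
  by apply: pne; apply: conv_of.
have hinf : tcost X A theta i x xt <= cost A theta i (upd xt i x).
  pose y0 := agg A (upd xt i x).
  have Oy0 : Om y0 := OmU xt x xtconv (conv_of Xx).
  have [c0 hc0] := @lsc_lb _ _ _ _ (Xcl i) (Xbd i) (lsc i y0 Oy0).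
  pose c1 := c0 - H * (n%:R^-1 * (M' * Delta)) `^ gamma.
  have hw : forall w, X i w -> c1 <= cost A theta i (upd xt i w).
    move=> w Xw; rewrite /cost upd_eq.
    have Ow : Om (agg A (upd xt i w)) := OmU xt w xtconv (conv_of Xw).
    have h1 := holdL w y0 _ Xw Oy0 Ow.
    have hv : vnorm (agg A (upd xt i w) - y0) <= n%:R^-1 * (M' * Delta).
      rewrite /y0 agg_diff0 (bigD1 i) //= big1 ?addr0; last first.
        by move=> j ji; rewrite !upd_neq // subrr mulmx0.
      rewrite !upd_eq vnormZ ger0_norm ?invr_ge0 ?ler0n // ler_wpM2l ?invr_ge0 ?ler0n //.
      apply: (le_trans (Anorm' i _)); rewrite ler_wpM2l //; exact: (Xdiam i w x Xw Xx).
    have hp : vnorm (agg A (upd xt i w) - y0) `^ gamma <= (n%:R^-1 * (M' * Delta)) `^ gamma.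
      apply: ge0_ler_powR => //; first exact: ltW.
        by rewrite nnegrE; exact: vnorm_ge0.
      by rewrite nnegrE mulr_ge0 ?invr_ge0 ?ler0n // mulr_ge0.
    have hc := hc0 w Xw; rewrite /= in hc.
    have hH : H * vnorm (agg A (upd xt i w) - y0) `^ gamma <=
              H * (n%:R^-1 * (M' * Delta)) `^ gamma by rewrite ler_wpM2l // ltW.
    rewrite /c1; lra.
  rewrite /tcost; apply: ge_inf.
    exists c1 => v /= [b [zz [[b0 b1] zzX xe ->]]].
    apply: (@le_trans _ _ (\sum_k b k * c1)).
      by rewrite -mulr_suml b1 mul1r.
    by apply: ler_sum => k _; apply: ler_wpM2l; [exact: b0 | exact: hw].
  pose b := fun k : 'I_d.+1 => if k == ord0 then 1 else 0 : R.
  have b1 : \sum_k b k = 1.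
    rewrite (bigD1 ord0) //= /b eqxx big1 ?addr0 // => k /negbTE -> //.
  exists b, (fun _ => x); split => //.
  - split => // k; rewrite /b; case: (k == ord0) => //; exact: ler01.
  - by rewrite -scaler_suml b1 scale1r.
  - by rewrite -mulr_suml b1 mul1r.
have HE : H * E <= H * K by rewrite ler_wpM2l // ltW.
rewrite -/K; lra.
Qed.
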